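(* Let $r\ge 3$ and let $\mathcal{M}$ be a uniform oriented matroid of rank $r$ on $n$ elements. If $X,Y$ are cocircuits of $\mathcal{M}$ with $|X^0\setminus Y^0|=2$, then $d_{\mathcal{M}}(X,Y)\le n-r+1$.
   Context: Sign vectors: for a finite set $E$ and $X\in\{+,-,0\}^E$, write $X^+=\{e:X_e=+\}$, $X^-=\{e:X_e=-\}$, $X^0=\{e:X_e=0\}$, $\operatorname{supp}(X)=X^+\cup X^-$, and $-X$ for the componentwise negation. For sign vectors $X,Y$, the separating set is $S(X,Y)=(X^+\cap Y^-)\cup(X^-\cap Y^+)$, and the composition $X\circ Y$ is given by $(X\circ Y)_e=X_e$ if $X_e\neq 0$ and $(X\circ Y)_e=Y_e$ otherwise. An oriented matroid $\mathcal{M}=(E,\mathcal{C}^* )$ is a finite set $E$ together with a set $\mathcal{C}^*\subseteq\{+,-,0\}^E$ of (signed) cocircuits satisfying: (CC0) $\mathbf{0}\notin\mathcal{C}^*$; (CC1) $X\in\mathcal{C}^*\Rightarrow -X\in\mathcal{C}^*$; (CC2) if $X,Y\in\mathcal{C}^*$ and $\operatorname{supp}(X)\subseteq\operatorname{supp}(Y)$ then $X=\pm Y$; (CC3) if $X,Y\in\mathcal{C}^*$, $X\neq -Y$ and $e\in S(X,Y)$, then there is $Z\in\mathcal{C}^*$ with $Z^+\subseteq (X^+\cup Y^+)\setminus\{e\}$ and $Z^-\subseteq (X^-\cup Y^-)\setminus\{e\}$. The covectors of $\mathcal{M}$ are $\mathbf{0}$ together with all compositions $X^1\circ\cdots\circ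 X^k$ ($k\ge 1$) of cocircuits, partially ordered componentwise by $0<+$ and $0<-$ ($+,-$ incomparable). The rank $r$ of $\mathcal{M}$ is the largest $k$ such that there is a chain $\mathbf{0}=V_0<V_1<\cdots<V_k$ of covectors. $\mathcal{M}$ is uniform if $|X^0|=r-1$ for every cocircuit $X$. The cocircuit graph $G^*(\mathcal{M})$ has the cocircuits as vertices, with distinct cocircuits $X,Y$ adjacent iff $|X^0\cap Y^0|\ge r-2$ and $S(X,Y)=\emptyset$. $d_{\mathcal{M}}(X,Y)$ denotes graph distance in $G^*(\mathcal{M})$. *)

(* Defs.v *)
From mathcomp Require Import all_boot.
Set Implicit Arguments. Unset Strict Implicit. Unset Printing Implicit Defensive.

(* Signs: Some true = +, Some false = -, None = 0. *)
Definition sign := option bool.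
Notation svec E := {ffun E -> sign}.

Section SignVectors.
Variable E : finType.
Implicit Types X Y Z V W : svec E.

Definition sv0 : svec E := [ffun _ => None].
Definition svneg X : svec E := [ffun e => omap negb (X e)].
Definition svplus X : {set E} := [set e | X e == Some true].
Definition svminus X : {set E} := [set e | X e == Some false].
Definition svzero X : {set E} := [set e | X e == None].
Definition svsupp X : {set E} := svplus X :|: svminus X.
Definition svsep X Y : {set E} :=
  (svplus X :&: svminus Y) :|: (svminus X :&: svplus Y).
Definition svcomp X Y : svec E :=
  [ffun e => if X e is Some b then Some b else Y e].

(* Cocircuit axioms (CC0)-(CC3). *)
Definition is_om (C : {set svec E}) : Prop :=
  [/\ sv0 \notin C,
      (forall X, X \in C -> svneg X \in C),
      (forall X Y, X \in C -> Y \in C -> svsupp X \subset svsupp Y ->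
          X = Y \/ X = svneg Y) &
      (forall X Y e, X \in C -> Y \in C -> X <> svneg Y -> e \in svsep X Y ->
          exists2 Z, Z \in C &
            (svplus Z \subset (svplus X :|: svplus Y) :\ e) /\
            (svminus Z \subset (svminus X :|: svminus Y) :\ e))].

Definition covector (C : {set svec E}) V : Prop :=
  V = sv0 \/
  exists s : seq (svec E), [/\ s != [::], all (mem C) s & V = foldr svcomp sv0 s].

Definition svle V W : bool := [forall e, (V e == None) || (V e == W e)].
Definition svlt V W : bool := svle V W && (V != W).

Definition has_chain (C : {set svec E}) (k : nat) : Prop :=
  exists f : nat -> svec E,
    [/\ f 0 = sv0,
        (forall i, i <= k -> covector C (f i)) &
        (forall i, i < k -> svlt (f i) (f i.+1))].

Definition om_rank (C : {set svec E}) (r : nat) : Prop :=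
  has_chain C r /\ (forall k, has_chain C k -> k <= r).

Definition om_uniform (C : {set svec E}) (r : nat) : Prop :=
  forall X, X \in C -> #|svzero X| = r.-1.

Definition coadj (C : {set svec E}) (r : nat) : rel (svec E) :=
  fun X Y => [&& X \in C, Y \in C, X != Y,
                 r - 2 <= #|svzero X :&: svzero Y| & svsep X Y == set0].

(* d_M(X,Y) <= m : there is a walk of length at most m from X to Y in G*(M). *)
Definition codist_le (C : {set svec E}) (r : nat) X Y (m : nat) : Prop :=
  exists p : seq (svec E),
    [/\ size p <= m, path (coadj C r) X p & last X p = Y].
End SignVectors.

(* Main.v *)
Require Import Defs.
From mathcomp Require Import all_boot.
From mathcomp Require Import zify.
Set Implicit Arguments. Unset Strict Implicit. Unset Printing Implicit Defensive.


Definition opp (s t : option bool) : bool :=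
  match s, t with Some x, Some y => x != y | _, _ => false end.

Lemma in_sep (E : finType) (X Y : svec E) e : (e \in svsep X Y) = opp (X e) (Y e).
Proof. by rewrite !inE; case: (X e) => [[]|]; case: (Y e) => [[]|]. Qed.

Lemma in_zero (E : finType) (X : svec E) e : (e \in svzero X) = (X e == None).
Proof. by rewrite inE. Qed.

Lemma neg_app (E : finType) (X : svec E) e : svneg X e = omap negb (X e).
Proof. by rewrite ffunE. Qed.

Lemma zero_neg (E : finType) (X : svec E) : svzero (svneg X) = svzero X.
Proof. by apply/setP => e; rewrite !inE ffunE; case: (X e). Qed.

Lemma negK (E : finType) (X : svec E) : svneg (svneg X) = X.
Proof. by apply/ffunP => e; rewrite !ffunE; case: (X e) => [[]|]. Qed.

Lemma sepC (E : finType) (X Y : svec E) : svsep X Y = svsep Y X.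
Proof. by apply/setP => e; rewrite !in_sep; case: (X e) => [[]|]; case: (Y e) => [[]|]. Qed.

Lemma elimP (E : finType) (C : {set svec E}) X Y e :
  is_om C -> X \in C -> Y \in C -> X <> svneg Y -> opp (X e) (Y e) ->
  exists2 W, W \in C & W e = None /\
     (forall f s, W f = Some s -> X f = Some s \/ Y f = Some s).
Proof.
move=> [_ _ _ H3] XC YC XY he.
have := H3 X Y e XC YC XY; rewrite in_sep => /(_ he) [W WC [Hp Hm]].
exists W => //; split.
  case We: (W e) => [[]|] //.
    by have := subsetP Hp e; rewrite !inE We !eqxx /=; move/(_ isT).
  by have := subsetP Hm e; rewrite !inE We !eqxx /=; move/(_ isT).
move=> f [] Wf.
  by have := subsetP Hp f; rewrite !inE Wf eqxx => /(_ isT) /andP [_ /orP [/eqP|/eqP]]; auto.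
by have := subsetP Hm f; rewrite !inE Wf eqxx => /(_ isT) /andP [_ /orP [/eqP|/eqP]]; auto.
Qed.

Lemma neq_of_zero (E : finType) (X Y : svec E) :
  svzero X != svzero Y -> X <> Y /\ X <> svneg Y.
Proof.
move=> H; split => E1; move: H; rewrite E1 ?zero_neg eqxx //.
Qed.

Lemma elimZ (E : finType) (C : {set svec E}) X Y z :
  is_om C -> X \in C -> Y \in C -> svzero X != svzero Y ->
  X z != None -> Y z != None ->
  exists2 W, W \in C & svzero X :&: svzero Y :|: [set z] \subset svzero W.
Proof.
move=> om XC YC nXY Xz Yz.
have [XY XnY] := neq_of_zero nXY.
have negC : svneg Y \in C by case: om => _ H _ _; apply: H.
have key : forall Y', Y' \in C -> X <> svneg Y' -> opp (X z) (Y' z) ->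
    (forall f, Y f = None -> Y' f = None) ->
    exists2 W, W \in C & svzero X :&: svzero Y :|: [set z] \subset svzero W.
  move=> Y' Y'C XY' op HY'.
  have [W WC [Wz HW]] := elimP om XC Y'C XY' op.
  exists W => //; apply/subsetP => f; rewrite !inE => /orP [/andP [/eqP Xf /eqP Yf]|/eqP ->].
    by case Wf: (W f) => [s|] //; have [] := HW f s Wf; rewrite ?Xf ?(HY' f Yf).
  by rewrite Wz.
case op: (opp (X z) (Y z)).
  exact: (key Y YC XnY op (fun f h => h)).
apply: (key (svneg Y)) => //.
- by rewrite negK.
- move: Xz Yz op; rewrite neg_app; case: (X z) => [[]|]; case: (Y z) => [[]|] //.
- by move=> f; rewrite neg_app => ->.
Qed.


Definition hyp (E : finType) (C : {set svec E}) (T : {set E}) :=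
  exists2 Z, Z \in C & svzero Z = T.

Lemma sub_card_eq (E : finType) (A B : {set E}) :
  A \subset B -> #|B| <= #|A| -> A = B.
Proof. by move=> AB BA; apply/eqP; rewrite eqEcard AB BA. Qed.

Lemma exch (E : finType) (C : {set svec E}) r H G p z :
  is_om C -> om_uniform C r -> hyp C H -> hyp C G -> H != G -> p \in H ->
  H :\ p \subset G -> z \notin H :\ p -> hyp C ((H :\ p) :|: [set z]).
Proof.
move=> om un [ZH ZHC ZH0] [ZG ZGC ZG0] HG pH HpG zHp.
have cH : #|H| = r.-1 by rewrite -ZH0 un.
have cG : #|G| = r.-1 by rewrite -ZG0 un.
have cT : #|(H :\ p) :|: [set z]| = r.-1.
  by rewrite setUC cardsU1 zHp (cardsD1 p H) pH in cH *; lia.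
case zH: (z \in H).
  have zp : z = p by apply/eqP; move: zHp; rewrite !inE zH andbT negbK.
  exists ZH => //; rewrite ZH0 zp setUC setD1K //.
case zG: (z \in G).
  exists ZG => //; rewrite ZG0; symmetry; apply: sub_card_eq.
  2: by rewrite cG cT.
  by apply/subsetP => y; rewrite !inE => /orP [/andP [yp yH]|/eqP ->] //; apply: (subsetP HpG); rewrite !inE yp.
have [W WC sub] : exists2 W, W \in C & svzero ZH :&: svzero ZG :|: [set z] \subset svzero W.
  apply: elimZ => //; first by rewrite ZH0 ZG0.
    by move: zH; rewrite -ZH0 inE => /negbT.
  by move: zG; rewrite -ZG0 inE => /negbT.
exists W => //; symmetry; apply: sub_card_eq; last by rewrite (un W WC) cT.
apply: subset_trans sub; rewrite ZH0 ZG0; apply: setSU.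
by apply/subsetP => y yHp; rewrite inE (subsetP HpG _ yHp) andbT; move: yHp; rewrite inE => /andP [].
Qed.

Lemma foldr_none (E : finType) (s : seq (svec E)) e :
  (foldr (@svcomp E) (sv0 E) s e == None) = all (fun W : svec E => W e == None) s.
Proof.
elim: s => [|W s IH] /=; first by rewrite ffunE.
by rewrite ffunE; case: (W e) => [b|] //=.
Qed.

Lemma closedV (E : finType) (C : {set svec E}) V y :
  covector C V -> y \notin svzero V ->
  exists2 W, W \in C & svzero V \subset svzero W /\ y \notin svzero W.
Proof.
case=> [->|[s [_ sC ->]]]; first by rewrite inE ffunE.
rewrite inE foldr_none => /allPn [W Ws Wy].
exists W; first by move/allP: sC => /(_ W Ws).
split; last by rewrite inE.
apply/subsetP => e; rewrite !inE foldr_none => /allP /(_ W Ws) //.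
Qed.


Lemma hyp_card (E : finType) (C : {set svec E}) r T :
  om_uniform C r -> hyp C T -> #|T| = r.-1.
Proof. by move=> un [Z ZC <-]; rewrite un. Qed.

Lemma exch_step (E : finType) (C : {set svec E}) r (A T : {set E}) x :
  is_om C -> om_uniform C r -> #|T| = r.-1 -> A \subset T -> x \notin T ->
  (forall G : {set E}, #|G| = r.-1 -> x |: A \subset G -> hyp C G) ->
  forall n (H : {set E}), #|H :\: T| <= n -> hyp C H -> A \subset H -> x \notin H -> hyp C T.
Proof.
move=> om un cT AT xT IH n; elim: n => [|n IHn] H cn hH AH xH.
  have HT : H \subset T by rewrite -setD_eq0 -cards_eq0; lia.
  have -> : T = H by symmetry; apply: sub_card_eq => //; rewrite cT (hyp_card un hH).
  done.
have cH := hyp_card un hH.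
case: (boolP (H \subset T)) => [HT|].
  have -> : T = H by symmetry; apply: sub_card_eq => //; rewrite cT cH.
  done.
case/subsetPn => p pH pT.
case: (boolP (T \subset H)) => [TH|].
  have TH' : T = H by apply: sub_card_eq => //; rewrite cT cH.
  by move: pT; rewrite TH' pH.
case/subsetPn => z zT zH.
have pA : p \notin A by apply: contra pT; apply: (subsetP AT).
have hG : hyp C (x |: (H :\ p)).
  apply: IH.
    by rewrite cardsU1 !inE negb_and xH orbT (cardsD1 p H) pH in cH *; lia.
  apply: setUS; apply/subsetP => y yA; rewrite !inE (subsetP AH _ yA) andbT.
  by apply: contraNneq pA => <-.
have hH' := exch om un hH hG (H:=H) (G:=x |: (H :\ p)) (p:=p) (z:=z).
have : hyp C (H :\ p :|: [set z]).
  apply: hH'.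
  - by apply: contraNneq xH => ->; rewrite !inE eqxx.
  - done.
  - by apply/subsetP => y yH; rewrite in_setU1 yH orbT.
  - by rewrite !inE negb_and zH orbT.
move=> hH''; apply: (IHn _ _ hH'').
- have : (H :\ p :|: [set z]) :\: T \subset (H :\: T) :\ p.
    apply/subsetP => y; rewrite !inE => /andP [yT /orP [/andP [yp yH]|/eqP yz]].
      by rewrite yp yT yH.
    by move: yT; rewrite yz zT.
  move/subset_leq_card; move: cn; rewrite (cardsD1 p (H :\: T)) !inE pT pH /=; lia.
- apply/subsetP => y yA; rewrite !inE (subsetP AH _ yA) andbT.
  by apply/orP; left; apply: contraNneq pA => <-.
- rewrite !inE negb_or negb_and xH orbT /=.
  by apply: contraNneq xT => ->.
Qed.

Lemma all_hyp (E : finType) (C : {set svec E}) r :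
  is_om C -> om_rank C r -> om_uniform C r -> 0 < r ->
  forall T : {set E}, #|T| = r.-1 -> hyp C T.
Proof.
move=> om [[f [f0 fcov flt]] _] un r1.
pose Z i := svzero (f i).
have Zpr : forall i, i < r -> Z i.+1 \proper Z i.
  move=> i ir; have := flt i ir; rewrite /svlt /svle => /andP [/forallP le neq].
  rewrite properE; apply/andP; split.
    apply/subsetP => e; rewrite !inE => /eqP h; have := le e; rewrite h.
    by case/orP => // /eqP ->.
  apply/subsetPn.
  have [e ne] : exists e, f i e != f i.+1 e.
    apply/existsP; move: neq; apply: contraNT; rewrite negb_exists => /forallP H.
    by apply/eqP/ffunP => e; apply/eqP; move: (H e); rewrite negbK.
  have fie : f i e = None.
    by case/orP: (le e) => /eqP // h; rewrite h eqxx in ne.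
  by exists e; rewrite !inE ?fie // eq_sym -fie.
have Z0 : Z 0 = setT by apply/setP => e; rewrite /Z f0 !inE ffunE.
have cZ1 : #|Z 1| <= r.-1.
  have [y y0 y1] : exists2 y, y \in Z 0 & y \notin Z 1.
    by have /properP [_ [y y0 y1]] := Zpr 0 r1; exists y.
  have [W WC [sub _]] := closedV (fcov 1 r1) y1.
  by rewrite -(un W WC); apply: subset_leq_card.
have up : forall i, 0 < i <= r -> #|Z i| + i <= r.
  elim=> [//|i IH] /andP [_ ir].
  case: i IH ir => [_ _|i IH ir]; first by lia.
  have := proper_card (Zpr i.+1 ir); have := IH (ltnW ir); lia.
have down : forall j, j <= r -> j <= #|Z (r - j)|.
  elim=> [//|j IH] jr.
  have := proper_card (Zpr (r - j.+1) ltac:(lia)).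
  have -> : (r - j.+1).+1 = r - j by lia.
  have := IH (ltnW jr); lia.
have cZ : forall i, 0 < i <= r -> #|Z i| = r - i.
  move=> i ir; have := up i ir; have := down (r - i) ltac:(lia).
  have -> : r - (r - i) = i by lia.
  lia.
have L : forall k, k < r -> forall T : {set E}, #|T| = r.-1 -> Z k.+1 \subset T -> hyp C T.
  elim=> [_|k IH kr] T cT sub.
    have [y y0 y1] : exists2 y, y \in Z 0 & y \notin Z 1.
      by have /properP [_ [y y0 y1]] := Zpr 0 r1; exists y.
    have [W WC [sub1 _]] := closedV (fcov 1 r1) y1.
    have e1 : Z 1 = svzero W by apply: sub_card_eq => //; rewrite (un W WC) cZ //; lia.
    have e2 : Z 1 = T by apply: sub_card_eq => //; rewrite cT cZ //; lia.
    by exists W => //; rewrite -e1.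
  have [_ [x xB xA]] := properP (Zpr k.+1 kr).
  have eB : Z k.+1 = x |: Z k.+2.
    symmetry; apply: sub_card_eq.
      by apply/subsetP => y; rewrite in_setU1 => /orP [/eqP ->//|]; apply: (subsetP (proper_sub (Zpr k.+1 kr))).
    by rewrite cardsU1 xA cZ ?cZ; lia.
  have [W WC [sub1 xW]] := closedV (fcov k.+2 kr) xA.
  case: (boolP (x \in T)) => xT.
    apply: (IH (ltnW kr) T cT); rewrite eB; apply/subsetP => y; rewrite in_setU1.
    by case/orP => [/eqP ->//|]; apply: (subsetP sub).
  apply: (exch_step om un cT sub xT) (leqnn _) _ sub1 xW.
    by move=> G cG sG; apply: (IH (ltnW kr) G cG); rewrite eB.
  by exists W.
move=> T cT; apply: (L r.-1 ltac:(lia) T cT).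
have -> : r.-1.+1 = r by lia.
have : #|Z r| = 0 by rewrite cZ ?subnn //; lia.
by move/eqP; rewrite cards_eq0 => /eqP ->; apply: sub0set.
Qed.


Lemma cat_codist (E : finType) (C : {set svec E}) r X Y Z m1 m2 :
  codist_le C r X Y m1 -> codist_le C r Y Z m2 -> codist_le C r X Z (m1 + m2).
Proof.
move=> [p1 [s1 h1 l1]] [p2 [s2 h2 l2]]; exists (p1 ++ p2); split.
- by rewrite size_cat leq_add.
- by rewrite cat_path h1 l1 h2.
- by rewrite last_cat l1.
Qed.

Lemma codist_mono (E : finType) (C : {set svec E}) r X Y m m' :
  m <= m' -> codist_le C r X Y m -> codist_le C r X Y m'.
Proof. by move=> mm [p [s h l]]; exists p; split => //; apply: leq_trans mm. Qed.

Lemma opp_some s t : opp s t -> exists x, s = Some x /\ t = Some (~~ x).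
Proof. by case: s => [[]|]; case: t => [[]|] //= _; eexists; split. Qed.

Lemma L1 (E : finType) (C : {set svec E}) r :
  is_om C -> forall n (X Z : svec E), X \in C -> Z \in C -> #|svsep X Z| <= n ->
  X <> svneg Z -> r - 2 <= #|svzero X :&: svzero Z| ->
  codist_le C r X Z (#|svsep X Z| + 1).
Proof.
move=> om; elim=> [|n IH] X Z XC ZC sn XnZ cXZ.
  have s0 : svsep X Z = set0 by apply/eqP; rewrite -cards_eq0; lia.
  rewrite s0 cards0; case: (eqVneq X Z) => [<-|XZ].
    by exists [::]; split.
  exists [:: Z]; split => //=; rewrite andbT /coadj XC ZC XZ cXZ s0 eqxx //.
case: (set_0Vmem (svsep X Z)) => [s0|[e eS]].
  rewrite s0 cards0; case: (eqVneq X Z) => [<-|XZ].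
    by exists [::]; split.
  exists [:: Z]; split => //=; rewrite andbT /coadj XC ZC XZ cXZ s0 eqxx //.
have oe : opp (X e) (Z e) by rewrite -in_sep.
have [W WC [We HW]] := elimP om XC ZC XnZ oe.
have [xe [Xe Ze]] := opp_some oe.
have S1 : svsep X W \subset svsep X Z :\ e.
  apply/subsetP => f; rewrite in_setD1 !in_sep => o.
  have [y [Xf Wf]] := opp_some o.
  have fe : f != e by apply: contraTneq o => ->; rewrite We; case: (X e).
  rewrite fe /=; move: (HW f _ Wf); rewrite Xf.
  by case: y {Xf Wf o}; case: (Z f) => [[]|] //= [] [].
have S2 : svsep W Z \subset svsep X Z :\ e.
  apply/subsetP => f; rewrite in_setD1 !in_sep => o.
  have [y [Wf Zf]] := opp_some o.
  have fe : f != e by apply: contraTneq o => ->; rewrite We.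
  rewrite fe /=; move: (HW f _ Wf); rewrite Zf.
  by case: y {Zf Wf o}; case: (X f) => [[]|] //= [] [].
have D : svsep X W :&: svsep W Z = set0.
  apply/setP => f; rewrite in_setI !in_sep in_set0.
  case Wf: (W f) => [y|]; last by case: (X f); rewrite ?andbF.
  by case: (HW f _ Wf) => ->; case: y {Wf}; rewrite /= ?andbF.
have Z0 : svzero X :&: svzero Z \subset svzero W.
  apply/subsetP => f; rewrite !inE => /andP [/eqP Xf /eqP Zf].
  by case Wf: (W f) => [y|] //; case: (HW f _ Wf); rewrite ?Xf ?Zf.
have cS : #|svsep X W| + #|svsep W Z| + 1 <= #|svsep X Z|.
  have := cardsUI (svsep X W) (svsep W Z); rewrite D cards0 addn0 => <-.
  have := subset_leq_card (introT subUsetP (conj S1 S2)) ; rewrite (cardsD1 e (svsep X Z)) eS; lia.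
have h1 : codist_le C r X W (#|svsep X W| + 1).
  apply: IH => //.
  - lia.
  - by move=> E1; move: Xe; rewrite E1 neg_app We.
  - apply: leq_trans cXZ _; apply: subset_leq_card; apply/subsetP => f fI.
    by rewrite in_setI (subsetP Z0 _ fI); move: fI; rewrite in_setI => /andP [] ->.
have h2 : codist_le C r W Z (#|svsep W Z| + 1).
  apply: IH => //.
  - lia.
  - by move=> E1; move: Ze; rewrite -[Z]negK -E1 neg_app We.
  - apply: leq_trans cXZ _; apply: subset_leq_card; apply/subsetP => f fI.
    by rewrite in_setI (subsetP Z0 _ fI); move: fI; rewrite in_setI => /andP [_ ->].
apply: codist_mono (cat_codist h1 h2); lia.
Qed.


Lemma par_opt (xc xd ub ud vb vc yb : option bool) :
 xc != None -> xd != None -> ub != None -> ud != None -> vb != None -> vc != None -> yb != None ->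
 (opp ub vb -> (xc = vc /\ xd = ud) \/ (xc = omap negb vc /\ xd = omap negb ud)) ->
 (~~ opp ub vb -> (xc = omap negb vc /\ xd = ud) \/ (xc = vc /\ xd = omap negb ud)) ->
 odd (((opp None ub + opp ub yb) + (opp None vb + opp vb yb)) +
      (((opp xc None + opp None None) + (opp xc vc + opp vc None)) +
       ((opp xd ud + opp ud None) + (opp xd None + opp None None)))).
Proof.
case: xc => [xc|] // _; case: xd => [xd|] // _; case: ub => [ub|] // _.
case: ud => [ud|] // _; case: vb => [vb|] // _; case: vc => [vc|] // _.
case: yb => [yb|] // _.
case: xc; case: xd; case: ub; case: ud; case: vb; case: vc; case: yb => /=;
  move=> H1 H2; try done;
  ((have := H1 isT) || (have := H2 isT)); case=> -[] ? ?; congruence.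
Qed.

Lemma even_opt (x u v y : option bool) :
  (x = None /\ u = None /\ v = None) \/
  (x != None /\ u != None /\ v != None /\ y != None) ->
  ~~ odd ((opp x u + opp u y) + (opp x v + opp v y)).
Proof.
case=> [[-> [-> ->]]|[hx [hu [hv hy]]]]; first by case: y.
by case: x hx => [[]|] // _; case: u hu => [[]|] // _; case: v hv => [[]|] // _;
  case: y hy => [[]|].
Qed.

Lemma card_sep (E : finType) (P Q : svec E) :
  #|svsep P Q| = \sum_e opp (P e) (Q e).
Proof.
rewrite -sum1_card big_mkcond /=; apply: eq_bigr => e _.
by rewrite in_sep; case: (opp _ _).
Qed.

Lemma even_sum (E : finType) (P : pred E) (g : E -> nat) :
  (forall e, P e -> ~~ odd (g e)) -> ~~ odd (\sum_(e | P e) g e).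
Proof.
move=> H; elim/big_rec: _ => // i x Pi ih.
by rewrite oddD (negbTE (H i Pi)) (negbTE ih).
Qed.

Lemma supp_zero (E : finType) (X : svec E) : svsupp X = ~: svzero X.
Proof. by apply/setP => e; rewrite !inE; case: (X e) => [[]|]. Qed.

Lemma sep_neg_bound (E : finType) (X W : svec E) :
  #|svsep X W| + #|svsep X (svneg W)| <= #|~: (svzero X :|: svzero W)|.
Proof.
rewrite -cardsUI.
have -> : svsep X W :&: svsep X (svneg W) = set0.
  apply/setP => e; rewrite in_setI !in_sep neg_app in_set0.
  by case: (X e) => [[]|]; case: (W e) => [[]|].
rewrite cards0 addn0; apply: subset_leq_card; apply/subsetP => e.
rewrite in_setU !in_sep neg_app !inE.
by case: (X e) => [[]|]; case: (W e) => [[]|].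
Qed.


Lemma omapK (s : option bool) : omap negb (omap negb s) = s.
Proof. by case: s => [[]|]. Qed.

Lemma elim_par (E : finType) (C : {set svec E}) r (X U V' : svec E) b c d :
  is_om C -> om_uniform C r -> X \in C -> U \in C -> V' \in C ->
  U <> svneg V' -> opp (U b) (V' b) ->
  U c = None -> V' d = None -> X c != None -> X d != None ->
  (forall f, X f = None -> f = b \/ (U f = None /\ V' f = None)) ->
  (X c = V' c /\ X d = U d) \/ (X c = omap negb (V' c) /\ X d = omap negb (U d)).
Proof.
move=> om un XC UC VC UV ob Uc Vd Xc Xd HX.
have [Z ZC [Zb HW]] := elimP om UC VC UV ob.
have sub : svzero X \subset svzero Z.
  apply/subsetP => f; rewrite !inE => /eqP Xf.
  case: (HX f Xf) => [->|[Uf Vf]]; first by rewrite Zb.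
  by case Zf: (Z f) => [s|] //; case: (HW f s Zf); rewrite ?Uf ?Vf.
have eZ : svzero X = svzero Z by apply: sub_card_eq => //; rewrite (un X XC) (un Z ZC).
have ZX : Z = X \/ Z = svneg X.
  case: om => _ _ H2 _; apply: H2 => //; rewrite !supp_zero setCS eZ //.
have Zc : Z c = V' c.
  have : Z c != None by rewrite -in_zero -eZ in_zero.
  by case Zf: (Z c) => [s|] // _; case: (HW c s Zf); rewrite ?Uc.
have Zd : Z d = U d.
  have : Z d != None by rewrite -in_zero -eZ in_zero.
  by case Zf: (Z d) => [s|] // _; case: (HW d s Zf); rewrite ?Vd.
case: ZX => [ZX|ZX]; [left|right]; rewrite -Zc -Zd ZX //.
by rewrite !neg_app !omapK.
Qed.

Lemma cand (E : finType) (C : {set svec E}) r (X W Y : svec E) :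
  is_om C -> X \in C -> W \in C -> Y \in C ->
  svzero X != svzero W -> svzero W != svzero Y ->
  r - 2 <= #|svzero X :&: svzero W| -> r - 2 <= #|svzero W :&: svzero Y| ->
  codist_le C r X Y (#|svsep X W| + #|svsep W Y| + 2).
Proof.
move=> om XC WC YC nXW nWY c1 c2.
have [_ h1] := neq_of_zero nXW.
have [_ h2] := neq_of_zero nWY.
have := cat_codist (@L1 _ C r om _ X W XC WC (leqnn _) h1 c1) (@L1 _ C r om _ W Y WC YC (leqnn _) h2 c2).
by apply: codist_mono; lia.
Qed.

Lemma bound_helper (E : finType) (X W : svec E) r e :
  #|svzero X| = r.-1 -> 0 < r -> e \notin svzero X -> e \in svzero W ->
  #|svsep X W| + #|svsep X (svneg W)| <= #|E| - r.
Proof.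
move=> cX r0 eX eW.
apply: leq_trans (sep_neg_bound X W) _.
have := cardsC (svzero X :|: svzero W).
have : #|e |: svzero X| <= #|svzero X :|: svzero W|.
  apply: subset_leq_card; apply/subsetP => f; rewrite in_setU1 in_setU.
  by case/orP => [/eqP ->|->]; rewrite ?eW ?orbT.
rewrite cardsU1 eX cX.
move: (#|svzero X :|: svzero W|) (#|~: (svzero X :|: svzero W)|) => m k.
clear; lia.
Qed.


Theorem corollary4p3 (E : finType) (C : {set {ffun E -> option bool}}) (r : nat)
    (X Y : {ffun E -> option bool}) :
  is_om C -> om_rank C r -> om_uniform C r -> 3 <= r ->
  X \in C -> Y \in C -> #|svzero X :\: svzero Y| = 2 ->
  codist_le C r X Y (#|E| - r + 1).
Proof.
move=> om rk un r3 XC YC c2.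
have negC : forall W, W \in C -> svneg W \in C by case: om => _ H _ _.
have cX := un X XC; have cY := un Y YC.
have cA : #|svzero X :&: svzero Y| = r.-1 - 2.
  by have := cardsID (svzero Y) (svzero X); lia.
have c2' : #|svzero Y :\: svzero X| = 2.
  by have := cardsID (svzero X) (svzero Y); rewrite setIC; lia.
have [a [b [ab eab]]] : exists a b, a != b /\ svzero X :\: svzero Y = [set a; b].
  by apply/cards2P; rewrite c2.
have [c [d [cd ecd]]] : exists c d, c != d /\ svzero Y :\: svzero X = [set c; d].
  by apply/cards2P; rewrite c2'.
have inab : forall e, (e \in svzero X) && (e \notin svzero Y) = (e == a) || (e == b).
  by move=> e; rewrite andbC -in_setD eab !inE.
have incd : forall e, (e \in svzero Y) && (e \notin svzero X) = (e == c) || (e == d).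
  by move=> e; rewrite andbC -in_setD ecd !inE.
have := inab a; have := inab b; have := incd c; have := incd d.
rewrite !eqxx ?orbT /= => /andP [dY dX] /andP [cY0 cX0] /andP [bX bY] /andP [aX aY].
have ac : a != c by apply: contraNneq cX0 => <-.
have ad : a != d by apply: contraNneq dX => <-.
have bc : b != c by apply: contraNneq cX0 => <-.
have bd : b != d by apply: contraNneq dX => <-.
have [A eA] : exists A, A = svzero X :&: svzero Y by eexists.
have cA2 : #|A| = r.-1 - 2 by rewrite eA.
have aA : a \notin A by rewrite eA inE (negbTE aY) andbF.
have bA : b \notin A by rewrite eA inE (negbTE bY) andbF.
have cA' : c \notin A by rewrite eA inE (negbTE cX0).
have dA : d \notin A by rewrite eA inE (negbTE dX).
have [TU eTU] : exists TU, TU = a |: (c |: A) by eexists.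
have [TV eTV] : exists TV, TV = a |: (d |: A) by eexists.
have cTU : #|TU| = r.-1.
  rewrite eTU !cardsU1 in_setU1 negb_or ac aA cA' /= cA2; clear -r3; lia.
have cTV : #|TV| = r.-1.
  rewrite eTV !cardsU1 in_setU1 negb_or ad aA dA /= cA2; clear -r3; lia.
have [U UC U0] := all_hyp om rk un (ltnW (ltnW r3)) cTU.
have [V VC V0] := all_hyp om rk un (ltnW (ltnW r3)) cTV.

have inTU : forall e, (e \in TU) = (e == a) || (e == c) || (e \in A).
  by move=> e; rewrite eTU !in_setU1 orbA.
have inTV : forall e, (e \in TV) = (e == a) || (e == d) || (e \in A).
  by move=> e; rewrite eTV !in_setU1 orbA.
have inA : forall e, (e \in A) = (e \in svzero X) && (e \in svzero Y).
  by move=> e; rewrite eA in_setI.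
have ba : b != a by rewrite eq_sym.
have ca : c != a by rewrite eq_sym.
have da : d != a by rewrite eq_sym.
have cb : c != b by rewrite eq_sym.
have db : d != b by rewrite eq_sym.
have dc : d != c by rewrite eq_sym.
have bU0 : b \notin svzero U by rewrite U0 inTU (negbTE ba) (negbTE bc) (negbTE bA).
have bV0 : b \notin svzero V by rewrite V0 inTV (negbTE ba) (negbTE bd) (negbTE bA).
have aU0 : a \in svzero U by rewrite U0 inTU eqxx.
have aV0 : a \in svzero V by rewrite V0 inTV eqxx.
have cU0 : c \in svzero U by rewrite U0 inTU eqxx orbT.
have cV0 : c \notin svzero V by rewrite V0 inTV (negbTE ca) (negbTE cd) (negbTE cA').
have dV0 : d \in svzero V by rewrite V0 inTV eqxx orbT.
have dU0 : d \notin svzero U by rewrite U0 inTU (negbTE da) (negbTE dc) (negbTE dA).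
have AU : A \subset svzero U by apply/subsetP => e eA'; rewrite U0 inTU eA' !orbT.
have AV : A \subset svzero V by apply/subsetP => e eA'; rewrite V0 inTV eA' !orbT.
have AX : A \subset svzero X by rewrite eA subsetIl.
have AY : A \subset svzero Y by rewrite eA subsetIr.
have cardI : forall (e : E) (P Q : {set E}), e \notin A -> e \in P -> e \in Q ->
    A \subset P -> A \subset Q -> r - 2 <= #|P :&: Q|.
  move=> e P Q eA' eP eQ AP AQ.
  have : #|e |: A| <= #|P :&: Q|.
    apply: subset_leq_card; apply/subsetP => f; rewrite in_setU1 in_setI.
    by case/orP => [/eqP ->|fA]; rewrite ?eP ?eQ ?(subsetP AP _ fA) ?(subsetP AQ _ fA).
  rewrite cardsU1 eA' cA2; move: (#|P :&: Q|) => m; clear -r3; lia.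
have nXU : svzero X != svzero U by apply/eqP => h; move: bU0; rewrite -h bX.
have nXV : svzero X != svzero V by apply/eqP => h; move: bV0; rewrite -h bX.
have nUY : svzero U != svzero Y by apply/eqP => h; move: aY; rewrite -h aU0.
have nVY : svzero V != svzero Y by apply/eqP => h; move: aY; rewrite -h aV0.
have iXU : r - 2 <= #|svzero X :&: svzero U| by apply: (cardI a) => //.
have iXV : r - 2 <= #|svzero X :&: svzero V| by apply: (cardI a) => //.
have iUY : r - 2 <= #|svzero U :&: svzero Y| by apply: (cardI c) => //.
have iVY : r - 2 <= #|svzero V :&: svzero Y| by apply: (cardI d) => //.
have [N eN] : exists N, N = #|E| - r by eexists.
have key : forall W, W \in C -> svzero X != svzero W -> svzero W != svzero Y ->
    r - 2 <= #|svzero X :&: svzero W| -> r - 2 <= #|svzero W :&: svzero Y| ->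
    #|svsep X W| + #|svsep W Y| < N -> codist_le C r X Y (#|E| - r + 1).
  move=> W WC n1 n2 i1 i2 lt.
  apply: codist_mono (cand om XC WC YC n1 n2 i1 i2).
  move: lt; rewrite eN; move: (#|svsep X W| + #|svsep W Y|) => m; clear; lia.
have r0 : 0 < r by apply: leq_trans r3.
have B1 : #|svsep X U| + #|svsep X (svneg U)| <= N by rewrite eN; exact: bound_helper cX r0 cX0 cU0.
have B2 : #|svsep U Y| + #|svsep (svneg U) Y| <= N.
  by rewrite (sepC U Y) (sepC (svneg U) Y); rewrite eN; apply: (bound_helper cY r0 aY aU0).
have B3 : #|svsep X V| + #|svsep X (svneg V)| <= N by rewrite eN; exact: bound_helper cX r0 dX dV0.
have B4 : #|svsep V Y| + #|svsep (svneg V) Y| <= N.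
  by rewrite (sepC V Y) (sepC (svneg V) Y); rewrite eN; apply: (bound_helper cY r0 aY aV0).
have PAR : odd ((#|svsep X U| + #|svsep U Y|) + (#|svsep X V| + #|svsep V Y|)).

  have [K eK] : exists K : {set E}, K = b |: (c |: [set d]) by eexists.
  have inK : forall e, (e \in K) = (e == b) || (e == c) || (e == d).
    by move=> e; rewrite eK !in_setU1 in_set1 orbA.
  rewrite !card_sep -!big_split /= (bigID (fun e => e \in K)) /= oddD.
  rewrite [X in _ (+) X](negbTE (even_sum _)) ?addbF; last first.
    move=> e; rewrite inK !negb_or => /andP [/andP [eb ec] ed].
    apply: even_opt.
    case: (boolP (e \in svzero X)) => eX.
      have eUV : (e \in svzero U) && (e \in svzero V).
        case: (boolP (e \in svzero Y)) => eY.
          have eA' : e \in A by rewrite inA eX eY.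
          by rewrite U0 V0 inTU inTV eA' !orbT.
        have := inab e; rewrite eX eY (negbTE eb) orbF /= => /esym /eqP ->.
        by rewrite aU0 aV0.
      left; move/andP: eUV; rewrite !in_zero => -[/eqP -> /eqP ->].
      by move: eX; rewrite in_zero => /eqP ->.
    right.
    have ea : e != a by apply: contraNneq eX => ->.
    have eA' : e \notin A by rewrite inA (negbTE eX).
    have eY : e \notin svzero Y.
      apply/negP => eY; have := incd e; rewrite eY eX (negbTE ec) (negbTE ed) //.
    have eU : e \notin svzero U by rewrite U0 inTU (negbTE ea) (negbTE ec) (negbTE eA').
    have eV : e \notin svzero V by rewrite V0 inTV (negbTE ea) (negbTE ed) (negbTE eA').
    by move: eX eY eU eV; rewrite !in_zero => -> -> -> ->.
  rewrite eK big_setU1 /=; last by rewrite in_setU1 in_set1 negb_or bc bd.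
  rewrite big_setU1 /=; last by rewrite in_set1 cd.
  rewrite big_set1.
  have Xb : X b = None by apply/eqP; rewrite -in_zero.
  have Uc : U c = None by apply/eqP; rewrite -in_zero.
  have Yc : Y c = None by apply/eqP; rewrite -in_zero.
  have Vd : V d = None by apply/eqP; rewrite -in_zero.
  have Yd : Y d = None by apply/eqP; rewrite -in_zero.
  have Xc : X c != None by rewrite -in_zero.
  have Xd : X d != None by rewrite -in_zero.
  have Ub : U b != None by rewrite -in_zero.
  have Vb : V b != None by rewrite -in_zero.
  have Ud : U d != None by rewrite -in_zero.
  have Vc : V c != None by rewrite -in_zero.
  have Yb : Y b != None by rewrite -in_zero.
  have HX : forall W : svec E, (forall f, V f = None -> W f = None) ->
      forall f, X f = None -> f = b \/ (U f = None /\ W f = None).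
    move=> W HV f Xf; case: (eqVneq f b) => [->|fb]; first by left.
    right.
    have fX : f \in svzero X by rewrite in_zero Xf.
    have fUV : (f \in svzero U) && (f \in svzero V).
      case: (boolP (f \in svzero Y)) => fY.
        have fA : f \in A by rewrite inA fX fY.
        by rewrite U0 V0 inTU inTV fA !orbT.
      have := inab f; rewrite fX fY (negbTE fb) orbF /= => /esym /eqP ->.
      by rewrite aU0 aV0.
    move/andP: fUV; rewrite !in_zero => -[/eqP Uf /eqP Vf]; split => //.
    exact: HV.
  have [nUV0 nUV] : U <> V /\ U <> svneg V.
    by apply: neq_of_zero; apply/eqP => h; move: cV0; rewrite -h cU0.
  rewrite Xb Uc Yc Vd Yd.
  apply: par_opt => //.
  - move=> ob; exact: (elim_par om un XC UC VC nUV ob Uc Vd Xc Xd (HX V (fun f h => h))).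
  - move=> nob.
    have nUV' : U <> svneg (svneg V) by rewrite negK.
    have ob : opp (U b) (svneg V b).
      by move: Ub Vb nob; rewrite neg_app; case: (U b) => [[]|]; case: (V b) => [[]|].
    have Vd' : svneg V d = None by rewrite neg_app Vd.
    have HV' : forall f, V f = None -> svneg V f = None by move=> f h; rewrite neg_app h.
    have := elim_par om un XC UC (negC V VC) nUV' ob Uc Vd' Xc Xd (HX _ HV').
    by rewrite !neg_app !omapK.


case: (ltnP (#|svsep X U| + #|svsep U Y|) N) => h1.
  exact: key UC nXU nUY iXU iUY h1.
case: (ltnP (#|svsep X (svneg U)| + #|svsep (svneg U) Y|) N) => h2.
  by apply: (key _ (negC U UC)); rewrite ?zero_neg.
case: (ltnP (#|svsep X V| + #|svsep V Y|) N) => h3.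
  exact: key VC nXV nVY iXV iVY h3.
case: (ltnP (#|svsep X (svneg V)| + #|svsep (svneg V) Y|) N) => h4.
  by apply: (key _ (negC V VC)); rewrite ?zero_neg.
exfalso; move: PAR.
have eU : #|svsep X U| + #|svsep U Y| = N.
  clear -B1 B2 h1 h2; move: B1 B2 h1 h2; move: (#|svsep X U|) (#|svsep U Y|) (#|svsep X (svneg U)|) (#|svsep (svneg U) Y|) N.
  clear; lia.
have eV : #|svsep X V| + #|svsep V Y| = N.
  clear -B3 B4 h3 h4; move: B3 B4 h3 h4; move: (#|svsep X V|) (#|svsep V Y|) (#|svsep X (svneg V)|) (#|svsep (svneg V) Y|) N.
  clear; lia.
by rewrite eU eV addnn odd_double.
Qed.
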